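(* Let $\mathbb{T}$ be a time scale with $0\in\mathbb{T}_\kappa^\kappa$, let $\alpha\in]0,1]$, and let $f:\mathbb{T}\to\mathbb{R}$, $f(t)=|t|$. Then $$f^{\diamondsuit^\alpha}(0)=\begin{cases}0&\text{if }0\text{ is dense},\\ \dfrac{\sigma(0)+\rho(0)}{[\sigma(0)-\rho(0)]^\alpha}&\text{otherwise}.\end{cases}$$
   Context: A time scale $\mathbb{T}$ is a nonempty closed subset of $\mathbb{R}$. $\sigma(t)=\inf\{s\in\mathbb{T}:s>t\}$ ($\inf\emptyset=\sup\mathbb{T}$), $\rho(t)=\sup\{s\in\mathbb{T}:s<t\}$ ($\sup\emptyset=\inf\mathbb{T}$); $f^\sigma=f\circ\sigma$, $f^\rho=f\circ\rho$. A point $t$ is dense if $\sigma(t)=t=\rho(t)$. $\mathbb{T}^\kappa=\mathbb{T}\setminus\{\sup\mathbb{T}\}$ if $\sup\mathbb{T}$ is finite and left-scattered, else $\mathbb{T}$; $\mathbb{T}_\kappa=\mathbb{T}\setminus\{\inf\mathbb{T}\}$ if $\inf\mathbb{T}$ is finite and right-scattered, else $\mathbb{T}$; $\mathbb{T}_\kappa^\kappa=\mathbb{T}_\kappa\cap\mathbb{T}^\kappa$. Symmetric fractional derivative of order $\alpha$ at $t\in\mathbb{T}_\kappa^\kappa$: the real number $f^{\diamondsuit^\alpha}(t)$ (if it exists) such that for every $\varepsilon>0$ there is a neighborhood $U\subset\mathbb{T}$ of $t$ with $\big|[f^\sigma(t)-f(s)+f(2t-s)-f^\rho(t)]-f^{\diamondsuit^\alpha}(t)[\sigma(t)+2t-2s-\rho(t)]^\alpha\big|\le\varepsilon|\sigma(t)+2t-2s-\rho(t)|^\alpha$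 for all $s\in U$ with $2t-s\in U$. *)

(* Defs.v *)
From mathcomp Require Import all_boot all_order all_algebra.
From mathcomp Require Import all_classical all_reals all_analysis.
Set Implicit Arguments. Unset Strict Implicit. Unset Printing Implicit Defensive.
Import Order.TTheory GRing.Theory Num.Theory.
Import numFieldNormedType.Exports.
Local Open Scope classical_set_scope.
Local Open Scope ring_scope.

Definition time_scale {R : realType} (T : set R) : Prop :=
  T !=set0 /\ closed T.

Definition sigma {R : realType} (T : set R) (t : R) : R :=
  let A := [set s | T s /\ t < s] in
  if `[< A = set0 >] then sup T else inf A.

Definition rho {R : realType} (T : set R) (t : R) : R :=
  let A := [set s | T s /\ s < t] in
  if `[< A = set0 >] then inf T else sup A.

Definition dense_pt {R : realType} (T : set R) (t : R) : Prop :=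
  sigma T t = t /\ rho T t = t.

(* T^kappa: remove sup T if it is finite (T bounded above) and left-scattered *)
Definition T_up_kappa {R : realType} (T : set R) (t : R) : Prop :=
  T t /\ ~ (has_ubound T /\ t = sup T /\ rho T (sup T) < sup T).

(* T_kappa: remove inf T if it is finite (T bounded below) and right-scattered *)
Definition T_low_kappa {R : realType} (T : set R) (t : R) : Prop :=
  T t /\ ~ (has_lbound T /\ t = inf T /\ inf T < sigma T (inf T)).

Definition T_kk {R : realType} (T : set R) (t : R) : Prop :=
  T_low_kappa T t /\ T_up_kappa T t.

(* D is the symmetric fractional derivative of order alpha of f at t:
   for every eps > 0 there is a neighborhood U of t (relative to T, i.e. U `&` T
   with U a neighborhood of t in R) such that for all s in U with 2t - s in U
   the defining inequality holds. *)
Definition sym_frac_deriv {R : realType} (T : set R) (alpha : R)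
    (f : R -> R) (t D : R) : Prop :=
  forall eps : R, 0 < eps ->
  exists U : set R, nbhs t U /\
    forall s : R, T s -> U s -> T (2 * t - s) -> U (2 * t - s) ->
      `| (f (sigma T t) - f s + f (2 * t - s) - f (rho T t))
         - D * (sigma T t + 2 * t - 2 * s - rho T t) `^ alpha |
      <= eps * `| sigma T t + 2 * t - 2 * s - rho T t | `^ alpha.

(* Main.v *)
Require Import Defs.
From mathcomp Require Import all_boot all_order all_algebra.
From mathcomp Require Import all_classical all_reals all_analysis.
Import Order.TTheory GRing.Theory Num.Theory.
Import numFieldNormedType.Exports.
Local Open Scope classical_set_scope.
Local Open Scope ring_scope.

Lemma sigma0_prop (R : realType) (T : set R) : T 0 ->
  0 <= sigma T 0 /\ (forall s, T s -> 0 < s -> sigma T 0 <= s).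
Proof.
move=> T0; rewrite /sigma.
case: asboolP => [A0|A0].
  have ub : ubound T 0.
    move=> y Ty; rewrite leNgt; apply/negP => y0.
    by have : [set s | T s /\ 0 < s] y by [];  rewrite A0.
  have hub : has_ubound T by exists 0.
  split; first exact: (ub_le_sup hub).
  move=> s Ts s0; have := ub _ Ts; rewrite leNgt s0 //.
have lb : lbound [set s | T s /\ 0 < s] 0 by move=> y [_ /ltW].
have ne : [set s | T s /\ 0 < s] !=set0 by apply/set0P/eqP.
split; first exact: lb_le_inf.
by move=> s Ts s0; apply: (ge_inf (ex_intro _ 0 lb)).
Qed.

Lemma rho0_prop (R : realType) (T : set R) : T 0 ->
  rho T 0 <= 0 /\ (forall s, T s -> s < 0 -> s <= rho T 0).
Proof.
move=> T0; rewrite /rho.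
case: asboolP => [A0|A0].
  have lb : lbound T 0.
    move=> y Ty; rewrite leNgt; apply/negP => y0.
    by have : [set s | T s /\ s < 0] y by [];  rewrite A0.
  have hlb : has_lbound T by exists 0.
  split; first exact: (ge_inf hlb).
  move=> s Ts s0; have := lb _ Ts; rewrite leNgt s0 //.
have ub : ubound [set s | T s /\ s < 0] 0 by move=> y [_ /ltW].
have ne : [set s | T s /\ s < 0] !=set0 by apply/set0P/eqP.
split; first exact: ge_sup.
by move=> s Ts s0; apply: (ub_le_sup (ex_intro _ 0 ub)).
Qed.

Theorem proposition3p25 (R : realType) (T : set R) (alpha : R) :
  time_scale T -> T_kk T 0 -> 0 < alpha <= 1 ->
  (dense_pt T 0 -> sym_frac_deriv T alpha (fun x => `|x|) 0 0) /\
  (~ dense_pt T 0 ->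
     sym_frac_deriv T alpha (fun x => `|x|) 0
       ((sigma T 0 + rho T 0) / (sigma T 0 - rho T 0) `^ alpha)).
Proof.
move=> _ [[T0 _] _] /andP[a0 _].
have [s0 sP] := @sigma0_prop R T T0.
have [r0 rP] := @rho0_prop R T T0.
split.
  rewrite /sym_frac_deriv => -[-> ->] eps eps0; exists setT; split; first exact: filterT.
  move=> s _ _ _ _; rewrite mul0r subr0 mulr0 sub0r normrN normr0 sub0r addNr subr0 normr0.

  by apply: mulr_ge0; [exact: ltW|exact: powR_ge0].
rewrite /sym_frac_deriv => nd eps eps0.
have pos : 0 < sigma T 0 \/ rho T 0 < 0.
  case: (ltrgt0P (sigma T 0)) => [h|h|h]; first by left.
    by move: s0; rewrite leNgt h.
  case: (ltrgt0P (rho T 0)) => [h'|h'|h']; last by exfalso; apply: nd.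
    by move: r0; rewrite leNgt h'.
  by right.
pose r := if `[< 0 < sigma T 0 >] then sigma T 0 else - rho T 0.
have r_pos : 0 < r.
  rewrite /r; case: asboolP => //; case: pos => // h _; rewrite oppr_gt0 //.
exists (ball 0 r); split; first exact: nbhsx_ballx.
move=> s Ts Us; rewrite mulr0 sub0r => Tms Ums.
have sz : s = 0.
  move: Us Ums; rewrite /ball /= !sub0r opprK !normrN.
  rewrite /r; case: asboolP => [h|h] sr _.
    have h1 : s <= 0 by rewrite leNgt; apply/negP => hs; move: (sP _ Ts hs);
      rewrite leNgt; move: sr; rewrite ltr_norml => /andP[_ ->].
    have h2 : - s <= 0 by rewrite leNgt; apply/negP => hs; move: (sP _ Tms hs);
      rewrite leNgt; move: sr; rewrite ltr_norml => /andP[+ _]; rewrite ltrNl => ->.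
    by apply/eqP; rewrite eq_le h1 -oppr_le0 h2.
  have hr : rho T 0 < 0 by case: pos.
  have h1 : 0 <= s by rewrite leNgt; apply/negP => hs; move: (rP _ Ts hs);
      rewrite leNgt; move: sr; rewrite ltr_norml => /andP[+ _]; rewrite opprK => ->.
  have h2 : 0 <= - s by rewrite leNgt; apply/negP => hs; move: (rP _ Tms hs);
      rewrite leNgt; move: sr; rewrite ltr_norml => /andP[_]; rewrite ltrNr => ->.
  by apply/eqP; rewrite eq_le h1 -oppr_ge0 h2 andbT.
subst s.
have d0 : 0 < sigma T 0 - rho T 0.
  case: pos => h; first by rewrite subr_gt0; apply: (le_lt_trans r0).
  by rewrite subr_gt0; apply: (lt_le_trans h).
rewrite !mulr0 !subr0 addr0 oppr0 normr0 subr0 addr0 (ger0_norm s0) (ler0_norm r0) opprK.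
rewrite -mulrA mulVf ?mulr1; last by rewrite gt_eqF // powR_gt0.
rewrite subrr normr0; apply: mulr_ge0; [exact: ltW|exact: powR_ge0].
Qed.
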